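(* Consider the single-armed lazy restless bandit described in the context with fixed subsidy $\eta$, and let $\kappa=\frac{1}{1-\beta|p_{0,0}-p_{1,0}|}$, $b=\min\left\{1,\frac{R_1-R_0}{\rho_1-\rho_0}\right\}$, $c=\max\left\{1,\frac{R_1-R_0}{\rho_1-\rho_0}\right\}$. If $\beta<\frac{1+b}{4}$ or $0<|p_{0,0}-p_{1,0}|<\frac{1+b}{4}$, then for all $\pi\in[0,1]$, $\left|\frac{\partial V(\pi)}{\partial\pi}\right|,\ \left|\frac{\partial V_S(\pi)}{\partial\pi}\right|,\ \left|\frac{\partial V_{NS}(\pi)}{\partial\pi}\right|\le\kappa c(\rho_1-\rho_0)$, where at points of non-differentiability the right partial derivative is used.
   Context: Single-armed lazy restless bandit: an arm has a hidden state in $\{0,1\}$ evolving as a two-state Markov chain with transition probabilities $p_{i,j}$ ($p_{i,0}+p_{i,1}=1$). During each session the chain makes exactly $K\ge1$ transitions. In each session the decision maker plays the arm or not. If played with the arm in state $i$ at session start, an ACK is received with probability $\rho_i\in[0,1]$ and the expected reward is $R_i$; if not played, subsidy $\eta$ is received and nothing observed. Discount $\beta\in(0,1)$. Standing assumptions: $\rho_0<\rho_1$, $R_0<R_1$. Belief $\pi\in[0,1]$ = probability of state $0$. $R_S(\pi)=\pi R_0+(1-\pi)R_1$, $\rho(\pi)=\pi\rho_0+(1-\pi)\rho_1$, $\gamma_1(\pi)=\frac{(1-\pi)\rho_1p_{1,0}+\pi\rho_0p_{0,0}}{\rho_1(1-\pi)+\rho_0\pi}$, $\gamma_0(\pi)=\frac{(1-\pi)(1-\rho_1)p_{1,0}+\pi(1-\rho_0)p_{0,0}}{(1-\rho_1)(1-\pi)+(1-\rho_0)\pi}$,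 $\gamma_2(\pi)=(p_{0,0}-p_{1,0})^K\pi+p_{1,0}\sum_{j=0}^{K-1}(p_{0,0}-p_{1,0})^j$. $V_S,V_{NS},V$ are the unique bounded solution of $V_S(\pi)=R_S(\pi)+\beta\big(\rho(\pi)V(\gamma_1(\pi))+(1-\rho(\pi))V(\gamma_0(\pi))\big)$, $V_{NS}(\pi)=\eta+\beta V(\gamma_2(\pi))$, $V(\pi)=\max\{V_S(\pi),V_{NS}(\pi)\}$ (a term with zero coefficient is taken to be $0$). *)

(* Defs.v *)
From Stdlib Require Import Reals.
From Coquelicot Require Import Coquelicot.
Open Scope R_scope.

(* Belief pi = probability that the hidden state is 0. *)
Definition RS (R0 R1 pi : R) : R := pi * R0 + (1 - pi) * R1.
Definition rhoB (rho0 rho1 pi : R) : R := pi * rho0 + (1 - pi) * rho1.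

Definition gamma1 (p00 p10 rho0 rho1 pi : R) : R :=
  ((1 - pi) * rho1 * p10 + pi * rho0 * p00) / (rho1 * (1 - pi) + rho0 * pi).

Definition gamma0 (p00 p10 rho0 rho1 pi : R) : R :=
  ((1 - pi) * (1 - rho1) * p10 + pi * (1 - rho0) * p00)
  / ((1 - rho1) * (1 - pi) + (1 - rho0) * pi).

Fixpoint geom (d : R) (K : nat) : R :=
  match K with
  | O => 0
  | S k => geom d k + d ^ k
  end.

Definition gamma2 (p00 p10 : R) (K : nat) (pi : R) : R :=
  (p00 - p10) ^ K * pi + p10 * geom (p00 - p10) K.

(* The convention "a term with zero coefficient is 0" is automatic: when
   rho(pi) = 0 (resp. 1 - rho(pi) = 0) the term is multiplied by 0. *)
Definition bellman_solution (p00 p10 rho0 rho1 R0 R1 eta beta : R) (K : nat)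
  (VS VNS V : R -> R) : Prop :=
  (exists M, forall pi, 0 <= pi <= 1 ->
      Rabs (VS pi) <= M /\ Rabs (VNS pi) <= M /\ Rabs (V pi) <= M) /\
  (forall pi, 0 <= pi <= 1 ->
     VS pi = RS R0 R1 pi
             + beta * (rhoB rho0 rho1 pi * V (gamma1 p00 p10 rho0 rho1 pi)
                       + (1 - rhoB rho0 rho1 pi) * V (gamma0 p00 p10 rho0 rho1 pi)) /\
     VNS pi = eta + beta * V (gamma2 p00 p10 K pi) /\
     V pi = Rmax (VS pi) (VNS pi)).

Definition is_right_deriv (f : R -> R) (x l : R) : Prop :=
  filterlim (fun h => (f (x + h) - f x) / h) (at_right 0) (locally l).

Definition is_left_deriv (f : R -> R) (x l : R) : Prop :=
  filterlim (fun h => (f (x + h) - f x) / h) (at_left 0) (locally l).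

(* "the derivative in the sense of the paper is bounded by C in absolute value":
   on [0,1) the right derivative exists and is bounded; at the right endpoint
   pi = 1 (where no right derivative exists on [0,1]) the one-sided (left)
   derivative exists and is bounded. *)
Definition one_sided_deriv_bounded (f : R -> R) (C : R) : Prop :=
  (forall pi, 0 <= pi < 1 -> exists l, is_right_deriv f pi l /\ Rabs l <= C) /\
  (exists l, is_left_deriv f 1 l /\ Rabs l <= C).

(* Main.v *)
Require Import Defs.
From Stdlib Require Import Reals Lra Classical.
From Coquelicot Require Import Coquelicot.
Open Scope R_scope.


Lemma right_lim_mono (g : R -> R) (d0 L : R) : 0 < d0 ->
  (forall h1 h2, 0 < h1 <= h2 -> h2 <= d0 -> g h1 <= g h2) ->
  (forall h, 0 < h <= d0 -> Rabs (g h) <= L) ->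
  exists l, filterlim g (at_right 0) (locally l) /\ Rabs l <= L.
Proof.
  intros Hd Hm Hb.
  set (E := fun v => exists h, 0 < h <= d0 /\ v = - g h).
  assert (HbE : bound E).
  { exists L. intros v [h [Hh ->]]. specialize (Hb h Hh). apply Rabs_le_between in Hb. lra. }
  assert (HeE : exists v, E v) by (exists (- g d0); exists d0; split; [lra|reflexivity]).
  destruct (completeness E HbE HeE) as [m [Hub Hlub]].
  assert (Hlow : forall h, 0 < h <= d0 -> - m <= g h).
  { intros h Hh. assert (E (- g h)) by (exists h; split; [exact Hh|reflexivity]).
    specialize (Hub _ H). lra. }
  exists (- m). split.
  - apply filterlim_locally. intros eps.
    pose proof (cond_pos eps) as Heps.
    assert (Hex : exists h0, 0 < h0 <= d0 /\ g h0 < - m + eps).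
    { apply NNPP. intro Hn.
      assert (Hup : is_upper_bound E (m - eps)).
      { intros v [h [Hh ->]]. destruct (Rlt_or_le (g h) (- m + eps)) as [Hlt|Hle].
        - exfalso. apply Hn. exists h. split; assumption.
        - lra. }
      specialize (Hlub _ Hup). lra. }
    destruct Hex as [h0 [Hh0 Hg0]].
    exists (mkposreal h0 (proj1 Hh0)). intros y Hy Hpos.
    change (Rabs (y - 0) < h0) in Hy.
    change (Rabs (g y - - m) < eps).
    rewrite Rminus_0_r in Hy. apply Rabs_lt_between in Hy.
    assert (g y <= g h0) by (apply Hm; lra).
    assert (- m <= g y) by (apply Hlow; lra).
    apply Rabs_lt_between. lra.
  - assert (- m <= g d0) by (apply Hlow; lra).
    assert (Hgd := Hb d0 ltac:(lra)). apply Rabs_le_between in Hgd.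
    assert (m <= L).
    { apply Hlub. intros v [h [Hh ->]]. specialize (Hb h Hh). apply Rabs_le_between in Hb. lra. }
    apply Rabs_le_between. lra.
Qed.

Lemma left_lim_mono (g : R -> R) (d0 L : R) : 0 < d0 ->
  (forall h1 h2, h1 <= h2 < 0 -> - d0 <= h1 -> g h1 <= g h2) ->
  (forall h, - d0 <= h < 0 -> Rabs (g h) <= L) ->
  exists l, filterlim g (at_left 0) (locally l) /\ Rabs l <= L.
Proof.
  intros Hd Hm Hb.
  set (E := fun v => exists h, - d0 <= h < 0 /\ v = g h).
  assert (HbE : bound E).
  { exists L. intros v [h [Hh ->]]. specialize (Hb h Hh). apply Rabs_le_between in Hb. lra. }
  assert (HeE : exists v, E v) by (exists (g (- d0)); exists (- d0); split; [lra|reflexivity]).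
  destruct (completeness E HbE HeE) as [m [Hub Hlub]].
  assert (Hup0 : forall h, - d0 <= h < 0 -> g h <= m).
  { intros h Hh. assert (E (g h)) by (exists h; split; [exact Hh|reflexivity]).
    specialize (Hub _ H). lra. }
  exists m. split.
  - apply filterlim_locally. intros eps.
    pose proof (cond_pos eps) as Heps.
    assert (Hex : exists h0, - d0 <= h0 < 0 /\ m - eps < g h0).
    { apply NNPP. intro Hn.
      assert (Hup : is_upper_bound E (m - eps)).
      { intros v [h [Hh ->]]. destruct (Rlt_or_le (m - eps) (g h)) as [Hlt|Hle].
        - exfalso. apply Hn. exists h. split; assumption.
        - lra. }
      specialize (Hlub _ Hup). lra. }
    destruct Hex as [h0 [Hh0 Hg0]].
    assert (Hp : 0 < - h0) by lra.
    exists (mkposreal (- h0) Hp). intros y Hy Hpos.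
    change (Rabs (y - 0) < - h0) in Hy.
    change (Rabs (g y - m) < eps).
    rewrite Rminus_0_r in Hy. apply Rabs_lt_between in Hy.
    assert (g h0 <= g y) by (apply Hm; lra).
    assert (g y <= m) by (apply Hup0; lra).
    apply Rabs_lt_between. lra.
  - assert (g (- d0) <= m) by (apply Hup0; lra).
    assert (Hgd := Hb (- d0) ltac:(lra)). apply Rabs_le_between in Hgd.
    assert (m <= L).
    { apply Hlub. intros v [h [Hh ->]]. specialize (Hb h Hh). apply Rabs_le_between in Hb. lra. }
    apply Rabs_le_between. lra.
Qed.


Definition lipL (L : R) (f : R -> R) := forall x y, 0 <= x <= 1 -> 0 <= y <= 1 ->
  Rabs (f x - f y) <= L * Rabs (x - y).
Definition convx (f : R -> R) := forall x y t, 0 <= x <= 1 -> 0 <= y <= 1 -> 0 <= t <= 1 ->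
  f (t * x + (1 - t) * y) <= t * f x + (1 - t) * f y.

Lemma quot_bound f L x h : lipL L f -> 0 <= x <= 1 -> 0 <= x + h <= 1 -> h <> 0 ->
  Rabs ((f (x + h) - f x) / h) <= L.
Proof.
  intros Hl Hx Hxh Hh. specialize (Hl _ _ Hxh Hx).
  replace (x + h - x) with h in Hl by ring.
  unfold Rdiv. rewrite Rabs_mult, Rabs_inv.
  assert (0 < Rabs h) by (apply Rabs_pos_lt; auto).
  apply (Rmult_le_reg_r (Rabs h)); auto.
  rewrite Rmult_assoc, Rinv_l by lra. lra.
Qed.

Lemma slope_mono f x h1 h2 : convx f -> 0 <= x <= 1 -> 0 <= x + h1 <= 1 -> 0 <= x + h2 <= 1 ->
  ((0 < h1 <= h2) \/ (h1 <= h2 < 0)) ->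
  (f (x + h1) - f x) / h1 <= (f (x + h2) - f x) / h2.
Proof.
  intros Hc Hx H1 H2 Hh.
  destruct Hh as [Hh|Hh].
  - set (t := h1 / h2).
    assert (Ht : 0 <= t <= 1).
    { unfold t; split. apply Rmult_le_pos; [lra| left; apply Rinv_0_lt_compat; lra].
      apply (Rmult_le_reg_r h2); [lra|]. unfold Rdiv. rewrite Rmult_assoc, Rinv_l by lra. lra. }
    specialize (Hc (x + h2) x t H2 Hx Ht).
    replace (t * (x + h2) + (1 - t) * x) with (x + h1) in Hc by (unfold t; field; lra).
    assert (Hk : f (x + h1) - f x <= t * (f (x + h2) - f x)) by lra.
    unfold t in Hk.
    apply (Rmult_le_reg_r (h1 * h2)). nra.
    replace ((f (x + h1) - f x) / h1 * (h1 * h2)) with ((f (x + h1) - f x) * h2) by (field; lra).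
    replace ((f (x + h2) - f x) / h2 * (h1 * h2)) with (h1 / h2 * (f (x + h2) - f x) * h2) by (field; lra).
    apply Rmult_le_compat_r; lra.
  - set (t := h2 / h1).
    assert (Ht : 0 <= t <= 1).
    { unfold t; split.
      replace (h2 / h1) with ((- h2) / (- h1)) by (field; lra).
      apply Rmult_le_pos; [lra| left; apply Rinv_0_lt_compat; lra].
      replace (h2 / h1) with ((- h2) / (- h1)) by (field; lra).
      apply (Rmult_le_reg_r (- h1)); [lra|]. unfold Rdiv. rewrite Rmult_assoc, Rinv_l by lra. lra. }
    specialize (Hc (x + h1) x t H1 Hx Ht).
    replace (t * (x + h1) + (1 - t) * x) with (x + h2) in Hc by (unfold t; field; lra).
    assert (Hk : f (x + h2) - f x <= t * (f (x + h1) - f x)) by lra.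
    unfold t in Hk.
    apply (Rmult_le_reg_r (h1 * h2)). nra.
    replace ((f (x + h1) - f x) / h1 * (h1 * h2)) with (h2 / h1 * (f (x + h1) - f x) * h1) by (field; lra).
    replace ((f (x + h2) - f x) / h2 * (h1 * h2)) with ((f (x + h2) - f x) * h1) by (field; lra).
    assert (0 <= (h2 / h1 * (f (x + h1) - f x) - (f (x + h2) - f x)) * (- h1)) by (apply Rmult_le_pos; lra).
    lra.
Qed.

Lemma deriv_bound f L : convx f -> lipL L f -> one_sided_deriv_bounded f L.
Proof.
  intros Hc Hl. split.
  - intros x Hx.
    destruct (right_lim_mono (fun h => (f (x + h) - f x) / h) (1 - x) L) as [l [H1 H2]].
    + lra.
    + intros h1 h2 Hh Hh2. apply slope_mono; auto; lra.
    + intros h Hh. apply quot_bound; auto; lra.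
    + exists l. split; auto.
  - destruct (left_lim_mono (fun h => (f (1 + h) - f 1) / h) 1 L) as [l [H1 H2]].
    + lra.
    + intros h1 h2 Hh Hh2. apply slope_mono; auto; lra.
    + intros h Hh. apply quot_bound; auto; lra.
    + exists l. split; auto.
Qed.


Definition A1 p00 p10 rho0 rho1 pi := (1 - pi) * rho1 * p10 + pi * rho0 * p00.
Definition A0 p00 p10 rho0 rho1 pi := (1 - pi) * (1 - rho1) * p10 + pi * (1 - rho0) * p00.

Definition Gf p00 p10 rho0 rho1 (f : R -> R) pi :=
  rhoB rho0 rho1 pi * f (gamma1 p00 p10 rho0 rho1 pi)
  + (1 - rhoB rho0 rho1 pi) * f (gamma0 p00 p10 rho0 rho1 pi).

Lemma rho_range rho0 rho1 pi : 0 <= rho0 <= 1 -> 0 <= rho1 <= 1 -> 0 <= pi <= 1 ->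
  0 <= rhoB rho0 rho1 pi <= 1.
Proof. intros. unfold rhoB. split; nra. Qed.

Lemma g1_eq p00 p10 rho0 rho1 pi : rhoB rho0 rho1 pi <> 0 ->
  gamma1 p00 p10 rho0 rho1 pi = A1 p00 p10 rho0 rho1 pi / rhoB rho0 rho1 pi.
Proof. intros. unfold gamma1, A1. unfold rhoB in *. f_equal. ring. Qed.

Lemma g0_eq p00 p10 rho0 rho1 pi : 1 - rhoB rho0 rho1 pi <> 0 ->
  gamma0 p00 p10 rho0 rho1 pi = A0 p00 p10 rho0 rho1 pi / (1 - rhoB rho0 rho1 pi).
Proof. intros. unfold gamma0, A0. unfold rhoB in *. f_equal. ring. Qed.

Lemma rho0_case rho0 rho1 pi : 0 <= rho0 <= 1 -> 0 <= rho1 <= 1 -> rho0 < rho1 -> 0 <= pi <= 1 ->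
  rhoB rho0 rho1 pi = 0 -> pi = 1 /\ rho0 = 0.
Proof.
  intros H0 H1 H01 Hp Hr. unfold rhoB in Hr.
  assert (0 <= pi * rho0) by (apply Rmult_le_pos; lra).
  assert (0 <= (1 - pi) * rho1) by (apply Rmult_le_pos; lra).
  assert ((1 - pi) * rho1 = 0) by lra.
  apply Rmult_integral in H3. destruct H3; [|lra].
  split; [lra|]. assert (pi = 1) by lra. subst. lra.
Qed.

Lemma rho1_case rho0 rho1 pi : 0 <= rho0 <= 1 -> 0 <= rho1 <= 1 -> rho0 < rho1 -> 0 <= pi <= 1 ->
  1 - rhoB rho0 rho1 pi = 0 -> pi = 0 /\ rho1 = 1.
Proof.
  intros H0 H1 H01 Hp Hr. unfold rhoB in Hr.
  assert (0 <= pi * (1 - rho0)) by (apply Rmult_le_pos; lra).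
  assert (0 <= (1 - pi) * (1 - rho1)) by (apply Rmult_le_pos; lra).
  assert (pi * (1 - rho0) = 0) by lra.
  apply Rmult_integral in H3. destruct H3; [|lra].
  split; [lra|]. subst. lra.
Qed.

Lemma A1_eq p00 p10 rho0 rho1 pi : 0 <= rho0 <= 1 -> 0 <= rho1 <= 1 -> rho0 < rho1 -> 0 <= pi <= 1 ->
  rhoB rho0 rho1 pi * gamma1 p00 p10 rho0 rho1 pi = A1 p00 p10 rho0 rho1 pi.
Proof.
  intros. destruct (Req_dec (rhoB rho0 rho1 pi) 0) as [Hz|Hz].
  - destruct (rho0_case rho0 rho1 pi) as [-> ->]; auto. rewrite Hz. unfold A1. ring.
  - rewrite g1_eq by auto. field. auto.
Qed.

Lemma A0_eq p00 p10 rho0 rho1 pi : 0 <= rho0 <= 1 -> 0 <= rho1 <= 1 -> rho0 < rho1 -> 0 <= pi <= 1 ->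
  (1 - rhoB rho0 rho1 pi) * gamma0 p00 p10 rho0 rho1 pi = A0 p00 p10 rho0 rho1 pi.
Proof.
  intros. destruct (Req_dec (1 - rhoB rho0 rho1 pi) 0) as [Hz|Hz].
  - destruct (rho1_case rho0 rho1 pi) as [-> ->]; auto. rewrite Hz. unfold A0. ring.
  - rewrite g0_eq by auto. field. auto.
Qed.

Lemma g1_range p00 p10 rho0 rho1 pi : 0 <= p00 <= 1 -> 0 <= p10 <= 1 ->
  0 <= rho0 <= 1 -> 0 <= rho1 <= 1 -> rho0 < rho1 -> 0 <= pi <= 1 ->
  0 <= gamma1 p00 p10 rho0 rho1 pi <= 1.
Proof.
  intros. destruct (Req_dec (rhoB rho0 rho1 pi) 0) as [Hz|Hz].
  - destruct (rho0_case rho0 rho1 pi) as [-> ->]; auto. unfold gamma1.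
    replace ((1 - 1) * rho1 * p10 + 1 * 0 * p00) with 0 by ring. unfold Rdiv. rewrite Rmult_0_l. lra.
  - rewrite g1_eq by auto. pose proof (rho_range rho0 rho1 pi).
    assert (0 < rhoB rho0 rho1 pi) by lra.
    assert (0 <= A1 p00 p10 rho0 rho1 pi <= rhoB rho0 rho1 pi).
    { unfold A1, rhoB. assert (0 <= (1 - pi) * rho1) by (apply Rmult_le_pos; lra).
      assert (0 <= pi * rho0) by (apply Rmult_le_pos; lra).
      replace ((1 - pi) * rho1 * p10 + pi * rho0 * p00) with (((1 - pi) * rho1) * p10 + (pi * rho0) * p00) by ring.
      split; nra. }
    split. apply Rmult_le_pos; [lra| left; apply Rinv_0_lt_compat; lra].
    apply (Rmult_le_reg_r (rhoB rho0 rho1 pi)); auto. unfold Rdiv. rewrite Rmult_assoc, Rinv_l by lra. lra.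
Qed.

Lemma g0_range p00 p10 rho0 rho1 pi : 0 <= p00 <= 1 -> 0 <= p10 <= 1 ->
  0 <= rho0 <= 1 -> 0 <= rho1 <= 1 -> rho0 < rho1 -> 0 <= pi <= 1 ->
  0 <= gamma0 p00 p10 rho0 rho1 pi <= 1.
Proof.
  intros. destruct (Req_dec (1 - rhoB rho0 rho1 pi) 0) as [Hz|Hz].
  - destruct (rho1_case rho0 rho1 pi) as [-> ->]; auto. unfold gamma0.
    replace ((1 - 0) * (1 - 1) * p10 + 0 * (1 - rho0) * p00) with 0 by ring. unfold Rdiv. rewrite Rmult_0_l. lra.
  - rewrite g0_eq by auto. pose proof (rho_range rho0 rho1 pi).
    assert (0 < 1 - rhoB rho0 rho1 pi) by lra.
    assert (0 <= A0 p00 p10 rho0 rho1 pi <= 1 - rhoB rho0 rho1 pi).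
    { unfold A0, rhoB. assert (0 <= (1 - pi) * (1 - rho1)) by (apply Rmult_le_pos; lra).
      assert (0 <= pi * (1 - rho0)) by (apply Rmult_le_pos; lra).
      replace ((1 - pi) * (1 - rho1) * p10 + pi * (1 - rho0) * p00) with (((1 - pi) * (1 - rho1)) * p10 + (pi * (1 - rho0)) * p00) by ring.
      split; nra. }
    split. apply Rmult_le_pos; [lra| left; apply Rinv_0_lt_compat; lra].
    apply (Rmult_le_reg_r (1 - rhoB rho0 rho1 pi)); auto. unfold Rdiv. rewrite Rmult_assoc, Rinv_l by lra. lra.
Qed.


Lemma G_lip_anch p00 p10 rho0 rho1 f L x y : 0 <= p00 <= 1 -> 0 <= p10 <= 1 ->
  0 <= rho0 <= 1 -> 0 <= rho1 <= 1 -> rho0 < rho1 -> 0 <= L -> lipL L f ->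
  0 <= x <= 1 -> 0 <= y <= 1 -> 0 < rhoB rho0 rho1 y < 1 ->
  Rabs (Gf p00 p10 rho0 rho1 f x - Gf p00 p10 rho0 rho1 f y) <= L * Rabs (p00 - p10) * Rabs (x - y).
Proof.
  intros Hp0 Hp1 Hr0 Hr1 Hr HL Hf Hx Hy Hry.
  pose proof (rho_range rho0 rho1 x Hr0 Hr1 Hx) as Hrx.
  pose proof (A1_eq p00 p10 rho0 rho1 x Hr0 Hr1 Hr Hx) as HA1.
  pose proof (A0_eq p00 p10 rho0 rho1 x Hr0 Hr1 Hr Hx) as HA0.
  pose proof (g1_eq p00 p10 rho0 rho1 y ltac:(lra)) as HB1.
  pose proof (g0_eq p00 p10 rho0 rho1 y ltac:(lra)) as HB0.
  pose proof (g1_range p00 p10 rho0 rho1 x) as R1x.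
  pose proof (g1_range p00 p10 rho0 rho1 y) as R1y.
  pose proof (g0_range p00 p10 rho0 rho1 x) as R0x.
  pose proof (g0_range p00 p10 rho0 rho1 y) as R0y.
  unfold Gf.
  set (rx := rhoB rho0 rho1 x) in *. set (ry := rhoB rho0 rho1 y) in *.
  set (g1x := gamma1 p00 p10 rho0 rho1 x) in *. set (g1y := gamma1 p00 p10 rho0 rho1 y) in *.
  set (g0x := gamma0 p00 p10 rho0 rho1 x) in *. set (g0y := gamma0 p00 p10 rho0 rho1 y) in *.
  set (d := p00 - p10).
  set (c1 := rho0 * rho1 / ry). set (c2 := (1 - rho0) * (1 - rho1) / (1 - ry)).
  set (c3 := (rho1 - rho0) ^ 2 * y * (1 - y) / (ry * (1 - ry))).
  assert (E1 : rx * (g1x - g1y) = d * (x - y) * c1).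
  { replace (rx * (g1x - g1y)) with (rx * g1x - rx * g1y) by ring. rewrite HA1, HB1.
    unfold c1, d, rx, ry, A1, rhoB. field. unfold ry, rhoB in Hry. lra. }
  assert (E2 : (1 - rx) * (g0x - g0y) = d * (x - y) * c2).
  { replace ((1 - rx) * (g0x - g0y)) with ((1 - rx) * g0x - (1 - rx) * g0y) by ring. rewrite HA0, HB0.
    unfold c2, d, rx, ry, A0, rhoB. field. unfold ry, rhoB in Hry. lra. }
  assert (E3 : (rx - ry) * (g1y - g0y) = d * (x - y) * c3).
  { rewrite HB1, HB0. unfold c3, d, rx, ry, A1, A0, rhoB. field. unfold ry, rhoB in Hry. lra. }
  assert (Esum : c1 + c2 + c3 = 1).
  { unfold c1, c2, c3, ry, rhoB. field. unfold ry, rhoB in Hry. lra. }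
  assert (Hc1 : 0 <= c1).
  { unfold c1. apply Rmult_le_pos. apply Rmult_le_pos; lra. left; apply Rinv_0_lt_compat; lra. }
  assert (Hc2 : 0 <= c2).
  { unfold c2. apply Rmult_le_pos. apply Rmult_le_pos; lra. left; apply Rinv_0_lt_compat; lra. }
  assert (Hc3 : 0 <= c3).
  { unfold c3. apply Rmult_le_pos. apply Rmult_le_pos. apply Rmult_le_pos. apply pow2_ge_0. lra. lra.
    left; apply Rinv_0_lt_compat. apply Rmult_lt_0_compat; lra. }
  replace (rx * f g1x + (1 - rx) * f g0x - (ry * f g1y + (1 - ry) * f g0y))
    with (rx * (f g1x - f g1y) + (1 - rx) * (f g0x - f g0y) + (rx - ry) * (f g1y - f g0y)) by ring.
  assert (B1 : Rabs (rx * (f g1x - f g1y)) <= L * Rabs (d * (x - y) * c1)).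
  { rewrite <- E1, !Rabs_mult, (Rabs_pos_eq rx) by lra.
    specialize (Hf g1x g1y ltac:(auto) ltac:(auto)).
    apply Rmult_le_compat_l with (r := rx) in Hf; [|lra]. nra. }
  assert (B2 : Rabs ((1 - rx) * (f g0x - f g0y)) <= L * Rabs (d * (x - y) * c2)).
  { rewrite <- E2, !Rabs_mult, (Rabs_pos_eq (1 - rx)) by lra.
    specialize (Hf g0x g0y ltac:(auto) ltac:(auto)).
    apply Rmult_le_compat_l with (r := 1 - rx) in Hf; [|lra]. nra. }
  assert (B3 : Rabs ((rx - ry) * (f g1y - f g0y)) <= L * Rabs (d * (x - y) * c3)).
  { rewrite <- E3, !Rabs_mult.
    specialize (Hf g1y g0y ltac:(auto) ltac:(auto)).
    pose proof (Rabs_pos (rx - ry)).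
    apply Rmult_le_compat_l with (r := Rabs (rx - ry)) in Hf; [|lra]. nra. }
  assert (Hab : forall c, 0 <= c -> Rabs (d * (x - y) * c) = Rabs d * Rabs (x - y) * c).
  { intros c Hc. rewrite !Rabs_mult, (Rabs_pos_eq c) by lra. reflexivity. }
  rewrite Hab in B1, B2, B3 by assumption.
  eapply Rle_trans. apply Rabs_triang.
  eapply Rle_trans. apply Rplus_le_compat_r. apply Rabs_triang.
  replace (L * Rabs d * Rabs (x - y)) with (L * (Rabs d * Rabs (x - y) * c1) + L * (Rabs d * Rabs (x - y) * c2) + L * (Rabs d * Rabs (x - y) * c3)).
  lra. replace c3 with (1 - c1 - c2) by lra. ring.
Qed.

Lemma G_deg p00 p10 f : Gf p00 p10 0 1 f 1 = f p00 /\ Gf p00 p10 0 1 f 0 = f p10.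
Proof.
  unfold Gf, rhoB. split.
  - replace (gamma0 p00 p10 0 1 1) with p00 by (unfold gamma0; field). ring.
  - replace (gamma1 p00 p10 0 1 0) with p10 by (unfold gamma1; field). ring.
Qed.

Lemma G_lip p00 p10 rho0 rho1 f L : 0 <= p00 <= 1 -> 0 <= p10 <= 1 ->
  0 <= rho0 <= 1 -> 0 <= rho1 <= 1 -> rho0 < rho1 -> 0 <= L -> lipL L f ->
  lipL (L * Rabs (p00 - p10)) (Gf p00 p10 rho0 rho1 f).
Proof.
  intros Hp0 Hp1 Hr0 Hr1 Hr HL Hf x y Hx Hy.
  destruct (Rlt_dec 0 (rhoB rho0 rho1 y)) as [a1|a1];
  [destruct (Rlt_dec (rhoB rho0 rho1 y) 1) as [a2|a2]|].
  - apply G_lip_anch; auto.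
  - destruct (Rlt_dec 0 (rhoB rho0 rho1 x)) as [b1|b1];
    [destruct (Rlt_dec (rhoB rho0 rho1 x) 1) as [b2|b2]|].
    + rewrite Rabs_minus_sym, (Rabs_minus_sym x). apply G_lip_anch; auto.
    + pose proof (rho_range rho0 rho1 x Hr0 Hr1 Hx). pose proof (rho_range rho0 rho1 y Hr0 Hr1 Hy).
      destruct (rho1_case rho0 rho1 x) as [-> _]; auto; try lra.
      destruct (rho1_case rho0 rho1 y) as [-> _]; auto; try lra.
      rewrite !Rminus_diag, Rabs_R0. lra.
    + pose proof (rho_range rho0 rho1 x Hr0 Hr1 Hx). pose proof (rho_range rho0 rho1 y Hr0 Hr1 Hy).
      destruct (rho0_case rho0 rho1 x) as [-> ->]; auto; try lra.
      destruct (rho1_case 0 rho1 y) as [-> ->]; auto; try lra.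
      destruct (G_deg p00 p10 f) as [-> ->].
      replace (1 - 0) with 1 by ring. rewrite Rabs_R1, Rmult_1_r. apply Hf; lra.
  - destruct (Rlt_dec 0 (rhoB rho0 rho1 x)) as [b1|b1];
    [destruct (Rlt_dec (rhoB rho0 rho1 x) 1) as [b2|b2]|].
    + rewrite Rabs_minus_sym, (Rabs_minus_sym x). apply G_lip_anch; auto.
    + pose proof (rho_range rho0 rho1 x Hr0 Hr1 Hx). pose proof (rho_range rho0 rho1 y Hr0 Hr1 Hy).
      destruct (rho0_case rho0 rho1 y) as [-> ->]; auto; try lra.
      destruct (rho1_case 0 rho1 x) as [-> ->]; auto; try lra.
      destruct (G_deg p00 p10 f) as [-> ->].
      replace (Rabs (0 - 1)) with 1 by (rewrite Rabs_minus_sym; replace (1 - 0) with 1 by ring; rewrite Rabs_R1; ring). rewrite Rmult_1_r.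
      rewrite Rabs_minus_sym. apply Hf; lra.
    + pose proof (rho_range rho0 rho1 x Hr0 Hr1 Hx). pose proof (rho_range rho0 rho1 y Hr0 Hr1 Hy).
      destruct (rho0_case rho0 rho1 x) as [-> _]; auto; try lra.
      destruct (rho0_case rho0 rho1 y) as [-> _]; auto; try lra.
      rewrite !Rminus_diag, Rabs_R0. lra.
Qed.


Lemma persp f t rx ry rz gx gy gz : convx f -> 0 <= t <= 1 -> 0 <= rx -> 0 <= ry ->
  0 <= gx <= 1 -> 0 <= gy <= 1 ->
  rz = t * rx + (1 - t) * ry -> rz * gz = t * rx * gx + (1 - t) * ry * gy ->
  rz * f gz <= t * rx * f gx + (1 - t) * ry * f gy.
Proof.
  intros Hc Ht Hx Hy Hgx Hgy Hr Hg.
  assert (0 <= t * rx) by (apply Rmult_le_pos; lra).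
  assert (0 <= (1 - t) * ry) by (apply Rmult_le_pos; lra).
  destruct (Req_dec rz 0) as [Hz|Hz].
  - assert (t * rx = 0) by lra. assert ((1 - t) * ry = 0) by lra.
    rewrite Hz, H1, H2. lra.
  - assert (Hpos : 0 < rz) by lra.
    set (w := t * rx / rz).
    assert (Hw : 0 <= w <= 1).
    { unfold w. split. apply Rmult_le_pos; [lra| left; apply Rinv_0_lt_compat; lra].
      apply (Rmult_le_reg_r rz); auto. unfold Rdiv. rewrite Rmult_assoc, Rinv_l by lra. lra. }
    assert (Hgz : gz = w * gx + (1 - w) * gy).
    { unfold w. apply (Rmult_eq_reg_l rz); auto. rewrite Hg. field_simplify; auto.
      rewrite Hr. field. }
    specialize (Hc gx gy w Hgx Hgy Hw). rewrite <- Hgz in Hc.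
    apply Rmult_le_compat_l with (r := rz) in Hc; [|lra].
    assert (E : rz * (w * f gx + (1 - w) * f gy) = t * rx * f gx + (rz - t * rx) * f gy)
      by (unfold w; field; lra).
    replace (rz - t * rx) with ((1 - t) * ry) in E by lra. lra.
Qed.

Lemma G_conv p00 p10 rho0 rho1 f : 0 <= p00 <= 1 -> 0 <= p10 <= 1 ->
  0 <= rho0 <= 1 -> 0 <= rho1 <= 1 -> rho0 < rho1 -> convx f ->
  convx (Gf p00 p10 rho0 rho1 f).
Proof.
  intros Hp0 Hp1 Hr0 Hr1 Hr Hf x y t Hx Hy Ht.
  assert (Hz : 0 <= t * x + (1 - t) * y <= 1) by (split; nra).
  pose proof (rho_range rho0 rho1 x Hr0 Hr1 Hx).
  pose proof (rho_range rho0 rho1 y Hr0 Hr1 Hy).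
  unfold Gf.
  assert (P1 := persp f t (rhoB rho0 rho1 x) (rhoB rho0 rho1 y) (rhoB rho0 rho1 (t * x + (1 - t) * y))
    (gamma1 p00 p10 rho0 rho1 x) (gamma1 p00 p10 rho0 rho1 y) (gamma1 p00 p10 rho0 rho1 (t * x + (1 - t) * y))
    Hf Ht ltac:(lra) ltac:(lra) ltac:(apply g1_range; auto) ltac:(apply g1_range; auto)
    ltac:(unfold rhoB; ring)).
  assert (P0 := persp f t (1 - rhoB rho0 rho1 x) (1 - rhoB rho0 rho1 y) (1 - rhoB rho0 rho1 (t * x + (1 - t) * y))
    (gamma0 p00 p10 rho0 rho1 x) (gamma0 p00 p10 rho0 rho1 y) (gamma0 p00 p10 rho0 rho1 (t * x + (1 - t) * y))
    Hf Ht ltac:(lra) ltac:(lra) ltac:(apply g0_range; auto) ltac:(apply g0_range; auto)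
    ltac:(unfold rhoB; ring)).
  rewrite !Rmult_assoc in P1, P0.
  rewrite !A1_eq in P1 by auto. rewrite !A0_eq in P0 by auto.
  assert (Q1 := P1 ltac:(unfold A1; ring)). assert (Q0 := P0 ltac:(unfold A0; ring)).
  lra.
Qed.


Lemma geom_rec d k : geom d k + d ^ k = d * geom d k + 1.
Proof. induction k; simpl. ring. rewrite Rmult_plus_distr_l. lra. Qed.

Lemma g2_range p00 p10 K pi : 0 <= p00 <= 1 -> 0 <= p10 <= 1 -> 0 <= pi <= 1 ->
  0 <= gamma2 p00 p10 K pi <= 1.
Proof.
  intros H0 H1 Hp. induction K.
  - unfold gamma2. simpl. lra.
  - assert (E : gamma2 p00 p10 (S K) pi = p00 * gamma2 p00 p10 K pi + (1 - gamma2 p00 p10 K pi) * p10).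
    { unfold gamma2. simpl geom. rewrite geom_rec. simpl. ring. }
    rewrite E. split; nra.
Qed.

Lemma Rmax_diff a b a' b' e : Rabs (a - a') <= e -> Rabs (b - b') <= e ->
  Rabs (Rmax a b - Rmax a' b') <= e.
Proof.
  intros H1 H2. apply Rabs_le_between in H1. apply Rabs_le_between in H2.
  apply Rabs_le_between. unfold Rmax. destruct (Rle_dec a b); destruct (Rle_dec a' b'); lra.
Qed.

Lemma lip_ext L f g : (forall x, 0 <= x <= 1 -> f x = g x) -> lipL L f -> lipL L g.
Proof. intros He Hf x y Hx Hy. rewrite <- !He by auto. auto. Qed.

Lemma conv_ext f g : (forall x, 0 <= x <= 1 -> f x = g x) -> convx f -> convx g.
Proof.
  intros He Hf x y t Hx Hy Ht. rewrite <- !He by (auto; split; nra). auto.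
Qed.

Lemma max_lip L f g : lipL L f -> lipL L g -> lipL L (fun x => Rmax (f x) (g x)).
Proof. intros Hf Hg x y Hx Hy. apply Rmax_diff; auto. Qed.

Lemma max_conv f g : convx f -> convx g -> convx (fun x => Rmax (f x) (g x)).
Proof.
  intros Hf Hg x y t Hx Hy Ht. specialize (Hf x y t Hx Hy Ht). specialize (Hg x y t Hx Hy Ht).
  pose proof (Rmax_l (f x) (g x)). pose proof (Rmax_r (f x) (g x)).
  pose proof (Rmax_l (f y) (g y)). pose proof (Rmax_r (f y) (g y)).
  apply Rmax_lub; nra.
Qed.

Lemma lim_le a b C beta : 0 <= C -> 0 < beta < 1 -> (forall n, a <= b + beta ^ n * C) -> a <= b.
Proof.
  intros HC Hb H. apply Rnot_lt_le. intro Hlt.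
  assert (Heps : 0 < (a - b) / (C + 1)) by (apply Rdiv_lt_0_compat; lra).
  destruct (pow_lt_1_zero beta ltac:(rewrite Rabs_pos_eq; lra) _ Heps) as [N HN].
  specialize (HN N (Nat.le_refl N)). specialize (H N).
  rewrite Rabs_pos_eq in HN by (apply pow_le; lra).
  assert (beta ^ N * (C + 1) < a - b).
  { apply (Rmult_lt_compat_r (C + 1)) in HN; [|lra]. unfold Rdiv in HN.
    rewrite Rmult_assoc, Rinv_l in HN by lra. lra. }
  pose proof (pow_le beta N ltac:(lra)). nra.
Qed.

Definition Sf p00 p10 rho0 rho1 R0 R1 beta f pi :=
  RS R0 R1 pi + beta * Gf p00 p10 rho0 rho1 f pi.
Definition Nf p00 p10 eta beta K (f : R -> R) pi := eta + beta * f (gamma2 p00 p10 K pi).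
Definition Tm p00 p10 rho0 rho1 R0 R1 eta beta K f pi :=
  Rmax (Sf p00 p10 rho0 rho1 R0 R1 beta f pi) (Nf p00 p10 eta beta K f pi).
Fixpoint Vn p00 p10 rho0 rho1 R0 R1 eta beta K n : R -> R :=
  match n with
  | O => fun _ => 0
  | S n => Tm p00 p10 rho0 rho1 R0 R1 eta beta K (Vn p00 p10 rho0 rho1 R0 R1 eta beta K n)
  end.


Lemma pow_le1 x n : 0 <= x <= 1 -> x ^ n <= 1.
Proof. intros H. induction n; simpl. lra. pose proof (pow_le x n ltac:(lra)). nra. Qed.

Lemma S_lip p00 p10 rho0 rho1 R0 R1 beta f L : 0 <= p00 <= 1 -> 0 <= p10 <= 1 ->
  0 <= rho0 <= 1 -> 0 <= rho1 <= 1 -> rho0 < rho1 -> R0 < R1 -> 0 < beta < 1 ->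
  0 <= L -> (R1 - R0) + beta * L * Rabs (p00 - p10) <= L -> lipL L f ->
  lipL L (Sf p00 p10 rho0 rho1 R0 R1 beta f).
Proof.
  intros Hp0 Hp1 Hr0 Hr1 Hr HR Hb HL HK Hf x y Hx Hy.
  pose proof (G_lip p00 p10 rho0 rho1 f L Hp0 Hp1 Hr0 Hr1 Hr HL Hf x y Hx Hy) as HG.
  unfold Sf, RS.
  replace (x * R0 + (1 - x) * R1 + beta * Gf p00 p10 rho0 rho1 f x -
    (y * R0 + (1 - y) * R1 + beta * Gf p00 p10 rho0 rho1 f y))
    with ((R0 - R1) * (x - y) + beta * (Gf p00 p10 rho0 rho1 f x - Gf p00 p10 rho0 rho1 f y)) by ring.
  eapply Rle_trans. apply Rabs_triang. rewrite !Rabs_mult.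
  rewrite (Rabs_left (R0 - R1)) by lra. rewrite (Rabs_pos_eq beta) by lra.
  pose proof (Rabs_pos (x - y)).
  apply Rmult_le_compat_l with (r := beta) in HG; [|lra].
  assert ((R1 - R0 + beta * L * Rabs (p00 - p10)) * Rabs (x - y) <= L * Rabs (x - y))
    by (apply Rmult_le_compat_r; lra).
  nra.
Qed.

Lemma S_conv p00 p10 rho0 rho1 R0 R1 beta f : 0 <= p00 <= 1 -> 0 <= p10 <= 1 ->
  0 <= rho0 <= 1 -> 0 <= rho1 <= 1 -> rho0 < rho1 -> 0 < beta < 1 -> convx f ->
  convx (Sf p00 p10 rho0 rho1 R0 R1 beta f).
Proof.
  intros Hp0 Hp1 Hr0 Hr1 Hr Hb Hf x y t Hx Hy Ht.
  pose proof (G_conv p00 p10 rho0 rho1 f Hp0 Hp1 Hr0 Hr1 Hr Hf x y t Hx Hy Ht) as HG.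
  unfold Sf, RS. apply Rmult_le_compat_l with (r := beta) in HG; [|lra]. nra.
Qed.

Lemma N_lip p00 p10 eta beta K f L : 0 <= p00 <= 1 -> 0 <= p10 <= 1 -> 0 < beta < 1 ->
  0 <= L -> lipL L f -> lipL L (Nf p00 p10 eta beta K f).
Proof.
  intros Hp0 Hp1 Hb HL Hf x y Hx Hy. unfold Nf.
  specialize (Hf _ _ (g2_range p00 p10 K x Hp0 Hp1 Hx) (g2_range p00 p10 K y Hp0 Hp1 Hy)).
  replace (gamma2 p00 p10 K x - gamma2 p00 p10 K y) with ((p00 - p10) ^ K * (x - y)) in Hf
    by (unfold gamma2; ring).
  rewrite Rabs_mult, <- RPow_abs in Hf.
  assert (Rabs (p00 - p10) ^ K <= 1).
  { apply pow_le1. split. apply Rabs_pos. apply Rabs_le_between. lra. }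
  replace (eta + beta * f (gamma2 p00 p10 K x) - (eta + beta * f (gamma2 p00 p10 K y)))
    with (beta * (f (gamma2 p00 p10 K x) - f (gamma2 p00 p10 K y))) by ring.
  rewrite Rabs_mult, (Rabs_pos_eq beta) by lra.
  pose proof (Rabs_pos (x - y)). pose proof (Rabs_pos (f (gamma2 p00 p10 K x) - f (gamma2 p00 p10 K y))).
  assert (L * (Rabs (p00 - p10) ^ K * Rabs (x - y)) <= L * Rabs (x - y)).
  { apply Rmult_le_compat_l; auto. rewrite <- (Rmult_1_l (Rabs (x - y))) at 2.
    apply Rmult_le_compat_r; auto. }
  nra.
Qed.

Lemma N_conv p00 p10 eta beta K f : 0 <= p00 <= 1 -> 0 <= p10 <= 1 -> 0 < beta < 1 ->
  convx f -> convx (Nf p00 p10 eta beta K f).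
Proof.
  intros Hp0 Hp1 Hb Hf x y t Hx Hy Ht. unfold Nf.
  specialize (Hf _ _ t (g2_range p00 p10 K x Hp0 Hp1 Hx) (g2_range p00 p10 K y Hp0 Hp1 Hy) Ht).
  replace (gamma2 p00 p10 K (t * x + (1 - t) * y)) with
    (t * gamma2 p00 p10 K x + (1 - t) * gamma2 p00 p10 K y) by (unfold gamma2; ring).
  apply Rmult_le_compat_l with (r := beta) in Hf; [|lra]. nra.
Qed.


Lemma T_contr p00 p10 rho0 rho1 R0 R1 eta beta K f g e pi : 0 <= p00 <= 1 -> 0 <= p10 <= 1 ->
  0 <= rho0 <= 1 -> 0 <= rho1 <= 1 -> rho0 < rho1 -> 0 < beta < 1 ->
  (forall x, 0 <= x <= 1 -> Rabs (f x - g x) <= e) -> 0 <= pi <= 1 ->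
  Rabs (Tm p00 p10 rho0 rho1 R0 R1 eta beta K f pi - Tm p00 p10 rho0 rho1 R0 R1 eta beta K g pi) <= beta * e.
Proof.
  intros Hp0 Hp1 Hr0 Hr1 Hr Hb He Hp. unfold Tm. apply Rmax_diff.
  - unfold Sf, Gf.
    pose proof (rho_range rho0 rho1 pi Hr0 Hr1 Hp).
    pose proof (He _ (g1_range p00 p10 rho0 rho1 pi Hp0 Hp1 Hr0 Hr1 Hr Hp)) as E1.
    pose proof (He _ (g0_range p00 p10 rho0 rho1 pi Hp0 Hp1 Hr0 Hr1 Hr Hp)) as E0.
    set (r := rhoB rho0 rho1 pi) in *.
    set (a := f (gamma1 p00 p10 rho0 rho1 pi) - g (gamma1 p00 p10 rho0 rho1 pi)) in *.
    set (a0 := f (gamma0 p00 p10 rho0 rho1 pi) - g (gamma0 p00 p10 rho0 rho1 pi)) in *.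
    replace (RS R0 R1 pi + beta * (r * f (gamma1 p00 p10 rho0 rho1 pi) + (1 - r) * f (gamma0 p00 p10 rho0 rho1 pi)) -
      (RS R0 R1 pi + beta * (r * g (gamma1 p00 p10 rho0 rho1 pi) + (1 - r) * g (gamma0 p00 p10 rho0 rho1 pi))))
      with (beta * (r * a + (1 - r) * a0)) by (unfold a, a0; ring).
    apply Rabs_le_between in E1. apply Rabs_le_between in E0.
    assert (Q1 : r * (- e) <= r * a <= r * e) by (split; apply Rmult_le_compat_l; lra).
    assert (Q2 : (1 - r) * (- e) <= (1 - r) * a0 <= (1 - r) * e) by (split; apply Rmult_le_compat_l; lra).
    assert (Q : - e <= r * a + (1 - r) * a0 <= e) by lra.
    rewrite Rabs_mult, (Rabs_pos_eq beta) by lra. apply Rmult_le_compat_l; [lra|].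
    apply Rabs_le_between. exact Q.
  - unfold Nf.
    pose proof (He _ (g2_range p00 p10 K pi Hp0 Hp1 Hp)) as E2.
    replace (eta + beta * f (gamma2 p00 p10 K pi) - (eta + beta * g (gamma2 p00 p10 K pi)))
      with (beta * (f (gamma2 p00 p10 K pi) - g (gamma2 p00 p10 K pi))) by ring.
    rewrite Rabs_mult, Rabs_pos_eq by lra. apply Rmult_le_compat_l; lra.
Qed.

Theorem lemma9 (p00 p10 rho0 rho1 R0 R1 eta beta : R) (K : nat)
  (VS VNS V : R -> R) :
  0 <= p00 <= 1 -> 0 <= p10 <= 1 ->
  0 <= rho0 <= 1 -> 0 <= rho1 <= 1 ->
  rho0 < rho1 -> R0 < R1 ->
  0 < beta < 1 -> (1 <= K)%nat ->
  bellman_solution p00 p10 rho0 rho1 R0 R1 eta beta K VS VNS V ->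
  let kappa := 1 / (1 - beta * Rabs (p00 - p10)) in
  let b := Rmin 1 ((R1 - R0) / (rho1 - rho0)) in
  let c := Rmax 1 ((R1 - R0) / (rho1 - rho0)) in
  (beta < (1 + b) / 4 \/ (0 < Rabs (p00 - p10) /\ Rabs (p00 - p10) < (1 + b) / 4)) ->
  one_sided_deriv_bounded V (kappa * c * (rho1 - rho0)) /\
  one_sided_deriv_bounded VS (kappa * c * (rho1 - rho0)) /\
  one_sided_deriv_bounded VNS (kappa * c * (rho1 - rho0)).
Proof.
  intros Hp0 Hp1 Hr0 Hr1 Hr HR Hb HK [[M HM] HB] kappa b c _.
  set (L := kappa * c * (rho1 - rho0)).
  assert (Hd : Rabs (p00 - p10) <= 1) by (apply Rabs_le_between; lra).
  assert (Hdp := Rabs_pos (p00 - p10)).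
  assert (Hk : 0 < 1 - beta * Rabs (p00 - p10)) by nra.
  assert (Hc1 : 1 <= c) by apply Rmax_l.
  assert (Hc2 : (R1 - R0) / (rho1 - rho0) <= c) by apply Rmax_r.
  assert (Hc3 : R1 - R0 <= c * (rho1 - rho0)).
  { apply (Rmult_le_compat_r (rho1 - rho0)) in Hc2; [|lra].
    unfold Rdiv in Hc2. rewrite Rmult_assoc, Rinv_l in Hc2 by lra. lra. }
  assert (HLe : L * (1 - beta * Rabs (p00 - p10)) = c * (rho1 - rho0)).
  { unfold L, kappa. field. lra. }
  assert (HL0 : 0 <= L).
  { unfold L, kappa. apply Rmult_le_pos; [|lra]. apply Rmult_le_pos; [|lra].
    unfold Rdiv. rewrite Rmult_1_l. left. apply Rinv_0_lt_compat. lra. }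
  assert (HLk : (R1 - R0) + beta * L * Rabs (p00 - p10) <= L) by nra.
  assert (HM0 : 0 <= M) by (destruct (HM 0 ltac:(lra)) as [_ [_ H]]; pose proof (Rabs_pos (V 0)); lra).
  set (T := Tm p00 p10 rho0 rho1 R0 R1 eta beta K).
  assert (HVS : forall x, 0 <= x <= 1 -> Sf p00 p10 rho0 rho1 R0 R1 beta V x = VS x).
  { intros x Hx. destruct (HB x Hx) as [E _]. rewrite E. reflexivity. }
  assert (HVN : forall x, 0 <= x <= 1 -> Nf p00 p10 eta beta K V x = VNS x).
  { intros x Hx. destruct (HB x Hx) as [_ [E _]]. rewrite E. reflexivity. }
  assert (HVT : forall x, 0 <= x <= 1 -> V x = T V x).
  { intros x Hx. destruct (HB x Hx) as [_ [_ E]]. rewrite E. unfold T, Tm.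
    rewrite HVS, HVN by auto. reflexivity. }
  set (W := Vn p00 p10 rho0 rho1 R0 R1 eta beta K).
  assert (Hconv : forall n x, 0 <= x <= 1 -> Rabs (W n x - V x) <= beta ^ n * M).
  { induction n; intros x Hx.
    - simpl. rewrite Rminus_0_l, Rabs_Ropp, Rmult_1_l. apply HM; auto.
    - simpl. rewrite HVT by auto. rewrite Rmult_assoc.
      apply T_contr; auto. }
  assert (HP : forall n, lipL L (W n) /\ convx (W n)).
  { induction n.
    - split.
      + intros x y _ _. change (Rabs (0 - 0) <= L * Rabs (x - y)). replace (0 - 0) with 0 by ring. rewrite Rabs_R0. apply Rmult_le_pos; auto. apply Rabs_pos.
      + intros x y t _ _ _. change (0 <= t * 0 + (1 - t) * 0). lra.
    - destruct IHn as [IL IC]. simpl. unfold Tm. split.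
      + apply max_lip. apply S_lip; auto. apply N_lip; auto.
      + apply max_conv. apply S_conv; auto. apply N_conv; auto. }
  assert (HVL : lipL L V).
  { intros x y Hx Hy. apply (lim_le _ _ (2 * M) beta); [lra|auto|].
    intros n. destruct (HP n) as [IL _]. specialize (IL x y Hx Hy).
    pose proof (Hconv n x Hx). pose proof (Hconv n y Hy).
    apply Rabs_le_between in H. apply Rabs_le_between in H0. apply Rabs_le_between in IL.
    apply Rabs_le_between. split; lra. }
  assert (HVC : convx V).
  { intros x y t Hx Hy Ht. apply (lim_le _ _ (2 * M) beta); [lra|auto|].
    intros n. destruct (HP n) as [_ IC]. specialize (IC x y t Hx Hy Ht).
    assert (Hz : 0 <= t * x + (1 - t) * y <= 1) by (split; nra).
    pose proof (Hconv n x Hx). pose proof (Hconv n y Hy). pose proof (Hconv n _ Hz).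
    apply Rabs_le_between in H. apply Rabs_le_between in H0. apply Rabs_le_between in H1.
    nra. }
  split; [|split].
  - apply deriv_bound; auto.
  - apply deriv_bound.
    + eapply conv_ext. exact HVS. apply S_conv; auto.
    + eapply lip_ext. exact HVS. apply S_lip; auto.
  - apply deriv_bound.
    + eapply conv_ext. exact HVN. apply N_conv; auto.
    + eapply lip_ext. exact HVN. apply N_lip; auto.
Qed.
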